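(* Let $\check p>0$, $\check\alpha>0$, $\gamma\ge0$. For every fixed $x>0$, as $T\uparrow\infty$: (1) $\epsilon_v(x,T)\to0$ and $\epsilon_u(x,T)\to0$; (2) $\bar v(x,T)\to v(x)$ and $\tilde v(x,T)\to v(x)$; (3) $\bar u(x,T)\to u(x)$ and $\tilde u(x,T)\to u(x)$.
   Context: Let $X$ be a spectrally negative Lévy process (no positive jumps, not the negative of a subordinator, Lévy measure without atoms), $\mathbb P^x$ the law with $X_0=x$, $\mathbb E^x$ its expectation, $\mathbb F$ the filtration generated by $X$; $r>0$ fixed with $\log\mathbb E^0[e^{X_1}]=r$. Let $\theta:=\inf\{t\ge0:X_t\le0\}$ ($\inf\emptyset=\infty$, $e^{-r\infty}=0$). $\mathcal S$ is the set of $\mathbb F$-stopping times $\tau\le\theta$ a.s., and $\mathcal S_T$ the set with $\tau\le\theta\wedge T$ a.s. Define $v(x):=\sup_{\tau\in\mathcal S}\mathbb E^x\big[\mathbf 1_{\{\tau<\infty\}}\big(\int_\tau^\theta e^{-rt}\check p\,dt-e^{-r\tau}\gamma\mathbf 1_{\{\tau<\theta\}}-e^{-r\theta}\check\alpha\mathbf 1_{\{\tau<\theta\}}\big)\big]$, $u(x):=\sup_{\tau\in\mathcal S}\mathbb E^x\big[\mathbf 1_{\{\tau<\infty\}}\big(-\int_\tau^\theta e^{-rt}\check p\,dt-e^{-r\tau}\gamma\mathbf 1_{\{\tau<\theta\}}+e^{-r\theta}\check\alpha\mathbf 1_{\{\tau<\theta\}}\big)\big]$, $\bar v(x,T):=\sup_{\tau\in\mathcal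 S_T}\mathbb E^x\big[\int_\tau^{\theta\wedge T}e^{-rt}\check p\,dt-e^{-r\tau}\gamma\mathbf 1_{\{\tau<\theta\wedge T\}}-e^{-r\theta}\check\alpha\mathbf 1_{\{\tau<\theta<T\}}\big]$, $\bar u(x,T):=\sup_{\tau\in\mathcal S_T}\mathbb E^x\big[-\int_\tau^{\theta\wedge T}e^{-rt}\check p\,dt-e^{-r\tau}\gamma\mathbf 1_{\{\tau<\theta\wedge T\}}+e^{-r\theta}\check\alpha\mathbf 1_{\{\tau<\theta<T\}}\big]$, $\tilde v(x,T):=v(x)-\mathbb E^x[\mathbf 1_{\{\theta\ge T\}}\int_T^\theta e^{-rt}\check p\,dt]$, $\tilde u(x,T):=u(x)+\mathbb E^x[\mathbf 1_{\{\theta\ge T\}}\int_T^\theta e^{-rt}\check p\,dt]$, $\epsilon_v(x,T):=\bar v(x,T)-\tilde v(x,T)$ and $\epsilon_u(x,T):=\bar u(x,T)-\tilde u(x,T)$. *)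

(* Defs.v *)
From HB Require Import structures.
From mathcomp Require Import all_boot all_order all_algebra.
From mathcomp Require Import all_classical all_reals all_analysis.
Set Implicit Arguments. Unset Strict Implicit. Unset Printing Implicit Defensive.
Import Order.TTheory GRing.Theory Num.Theory.
Import numFieldNormedType.Exports.
Local Open Scope classical_set_scope.
Local Open Scope ring_scope.
Local Open Scope ereal_scope.

Section Defs.
Context {R : realType} {d : measure_display} {Omega : measurableType d}.
Variable (P : probability Omega R) (X : R -> Omega -> R).

Definition jump (t : R) (w : Omega) : R :=
  (X t w - lim ((fun s => X s w) @ t^'-))%R.

Definition levy_measure (A : set R) : \bar R :=
  \int[P]_w counting [set t : R | (0 < t <= 1)%R /\ A (jump t w)].

Definition levy_process : Prop :=
  [/\ (forall t, (0 <= t)%R -> measurable_fun setT (X t)),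
      (forall w, X 0 w = 0%R),
      (forall w t, (0 <= t)%R -> (fun s => X s w) @ t^'+ --> X t w),
      (forall w t, (0 < t)%R -> cvg ((fun s => X s w) @ t^'-)) &
      (forall s t (B : set R), (0 <= s <= t)%R -> measurable B ->
         P [set w | B (X t w - X s w)%R] = P [set w | B (X (t - s) w)]) /\
      (forall (n : nat) (t : nat -> R) (B : nat -> set R),
         (0 <= t 0%N)%R -> (forall i, (i < n)%N -> (t i <= t i.+1)%R) ->
         (forall i, measurable (B i)) ->
         P (\bigcap_(i in `I_n) [set w | B i (X (t i.+1) w - X (t i) w)%R]) =
         \prod_(i < n) P [set w | B i (X (t i.+1) w - X (t i) w)%R])].

Definition spec_neg_levy : Prop :=
  [/\ levy_process,
      {ae P, forall w, forall t, (0 < t)%R -> (jump t w <= 0)%R},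
      ~ {ae P, forall w, forall s t, (0 <= s <= t)%R -> (X t w <= X s w)%R} &
      (forall a : R, a != 0%R -> levy_measure [set a] = 0)].

Definition natfilt (t : R) : set (set Omega) :=
  <<s \bigcup_(s in `[0%R, t]) [set A | exists2 B, measurable B & A = X s @^-1` B] >>.

Definition stopping_time (tau : Omega -> \bar R) : Prop :=
  (forall w, 0 <= tau w) /\
  (forall t : R, (0 <= t)%R -> natfilt t [set w | tau w <= t%:E]).

(* theta under P^x : first time x + X_t <= 0 (inf of empty set = +oo) *)
Definition theta (x : R) (w : Omega) : \bar R :=
  ereal_inf [set t%:E | t in [set t : R | (0 <= t)%R /\ (x + X t w <= 0)%R]].

Definition disc (r : R) (t : \bar R) : R :=
  match t with EFin s => expR (- r * s) | _ => 0%R end.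

Definition dint (r p : R) (a b : \bar R) : \bar R :=
  \int[lebesgue_measure]_(t in [set t : R | a <= t%:E /\ t%:E <= b])
     (expR (- r * t) * p)%:E.

Definition Sset (x : R) : set (Omega -> \bar R) :=
  [set tau | stopping_time tau /\ {ae P, forall w, tau w <= theta x w}].

Definition SsetT (x T : R) : set (Omega -> \bar R) :=
  [set tau | stopping_time tau /\
             {ae P, forall w, tau w <= Order.min (theta x w) T%:E}].

Variables (r p alpha gamma : R).

Definition vfun (x : R) : \bar R :=
  ereal_sup [set \int[P]_w
     (if tau w < +oo then
        dint r p (tau w) (theta x w)
        - (if tau w < theta x w then (disc r (tau w) * gamma)%:E else 0)
        - (if tau w < theta x w then (disc r (theta x w) * alpha)%:E else 0)
      else 0) | tau in Sset x].

Definition ufun (x : R) : \bar R :=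
  ereal_sup [set \int[P]_w
     (if tau w < +oo then
        - dint r p (tau w) (theta x w)
        - (if tau w < theta x w then (disc r (tau w) * gamma)%:E else 0)
        + (if tau w < theta x w then (disc r (theta x w) * alpha)%:E else 0)
      else 0) | tau in Sset x].

Definition vbar (x T : R) : \bar R :=
  ereal_sup [set \int[P]_w
     (dint r p (tau w) (Order.min (theta x w) T%:E)
      - (if tau w < Order.min (theta x w) T%:E
         then (disc r (tau w) * gamma)%:E else 0)
      - (if (tau w < theta x w) && (theta x w < T%:E)
         then (disc r (theta x w) * alpha)%:E else 0)) | tau in SsetT x T].

Definition ubar (x T : R) : \bar R :=
  ereal_sup [set \int[P]_w
     (- dint r p (tau w) (Order.min (theta x w) T%:E)
      - (if tau w < Order.min (theta x w) T%:E
         then (disc r (tau w) * gamma)%:E else 0)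
      + (if (tau w < theta x w) && (theta x w < T%:E)
         then (disc r (theta x w) * alpha)%:E else 0)) | tau in SsetT x T].

Definition tailterm (x T : R) : \bar R :=
  \int[P]_w (if T%:E <= theta x w then dint r p T%:E (theta x w) else 0).

Definition vtilde (x T : R) : \bar R := vfun x - tailterm x T.
Definition utilde (x T : R) : \bar R := ufun x + tailterm x T.
Definition eps_v (x T : R) : \bar R := vbar x T - vtilde x T.
Definition eps_u (x T : R) : \bar R := ubar x T - utilde x T.

End Defs.

(* Main.v *)
Require Import Defs.
From HB Require Import structures.
From mathcomp Require Import all_boot all_order all_algebra.
From mathcomp Require Import all_classical all_reals all_analysis.
From mathcomp Require Import measurable_realfun.
From mathcomp Require Import ring lra.
Import Order.TTheory GRing.Theory Num.Theory.
Import numFieldNormedType.Exports.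
Local Open Scope classical_set_scope.
Local Open Scope ring_scope.
Set Implicit Arguments. Unset Strict Implicit. Unset Printing Implicit Defensive.
Section inner.
Import HBNNSimple.
Local Open Scope ereal_scope.
Context d (T : measurableType d) (R : realType) (mu : {measure set T -> \bar R}).

Lemma nn_mono (f g : T -> \bar R) : (forall x, 0 <= f x) -> (forall x, f x <= g x) ->
  \int[mu]_x f x <= \int[mu]_x g x.
Proof.
move=> f0 fg.
have g0 : forall x, 0 <= g x by move=> x; exact: le_trans (f0 x) (fg x).
rewrite (ge0_integralE mu (D:=setT) (fun x _ => f0 x)).
rewrite (ge0_integralE mu (D:=setT) (fun x _ => g0 x)) /=.
apply: ereal_sup_le => _ [h /= hf <-]; exists h => //= x.
by apply: le_trans (hf x) _; rewrite !patch_setT; exact: fg.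
Qed.

Hypothesis mu1 : mu setT = 1.

Lemma nn_shift (f g : T -> \bar R) (c : R) : (0 <= c)%R ->
  (forall x, 0 <= f x) -> (forall x, 0 <= g x) -> (forall x, f x <= g x + c%:E) ->
  \int[mu]_x f x <= \int[mu]_x g x + c%:E.
Proof.
move=> c0 f0 g0 fg.
rewrite (ge0_integralE mu (D:=setT) (fun x _ => f0 x)) /=.
apply: ge_ereal_sup => _ [h /= hf <-].
pose k x : R := Num.max (h x - c)%R 0%R.
have mk : measurable_fun [set: T] (EFin \o k).
  apply/measurable_EFinP; apply: measurable_maxr => //.
  by apply: measurable_funB => //.
have k0 : forall x, 0 <= (k x)%:E by move=> x; rewrite lee_fin le_max lexx orbT.
have -> : sintegral mu h = \int[mu]_x (h x)%:E.
  by rewrite integral_nnsfun // patch_setT.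
apply: (le_trans (_ : _ <= \int[mu]_x ((k x)%:E + (cst c%:E) x)) _).
  apply: ge0_le_integral => //.
  - by move=> x _; rewrite lee_fin fun_ge0.
  - by apply/measurable_EFinP; exact: measurable_funPT.
  - by apply: emeasurable_funD => //.
  - move=> x _; rewrite /= -EFinD lee_fin /k.
    by rewrite -lerBlDr le_max lexx.
rewrite ge0_integralD //; try by move=> x _; rewrite lee_fin.
rewrite integral_cst // mu1 mule1 leeD2r.
rewrite ?lee_fin //.
apply: nn_mono => // x.
have := hf x; rewrite patch_setT => hfx.
have := fg x => fgx.
rewrite /k; case: (leP (h x - c)%R 0%R) => _.
  by [].
move: (g0 x) fgx; case: (g x) => [gx| |] //= _ fgx; last by rewrite leey.
rewrite lee_fin lerBlDr -lee_fin EFinD.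
exact: le_trans hfx fgx.
Qed.

End inner.
Section inner2.
Local Open Scope ereal_scope.
Context d (T : measurableType d) (R : realType) (mu : {measure set T -> \bar R}).
Hypothesis mu1 : mu setT = 1.

Lemma nn_bound (F : T -> R) (M : R) : (0 <= M)%R -> (forall x, 0 <= F x <= M)%R ->
  exists a : R, \int[mu]_x (F x)%:E = a%:E /\ (0 <= a <= M)%R.
Proof.
move=> M0 FM.
have F0 : forall x, 0 <= (F x)%:E by move=> x; rewrite lee_fin; case/andP: (FM x).
have h1 : \int[mu]_x (F x)%:E <= \int[mu]_x (cst 0) x + M%:E.
  apply: nn_shift => // x; rewrite add0e lee_fin; by case/andP: (FM x).
rewrite integral0 add0e in h1.
have h2 : 0 <= \int[mu]_x (F x)%:E by apply: integral_ge0 => x _.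
exists (fine (\int[mu]_x (F x)%:E)).
have fin : \int[mu]_x (F x)%:E \is a fin_num by rewrite ge0_fin_numE // (le_lt_trans h1) ?ltry.
rewrite fineK //; split => //.
by rewrite -lee_fin -(lee_fin _ M) fineK // h2 h1.
Qed.

Lemma int_fin (F : T -> R) (M : R) : (0 <= M)%R -> (forall x, `|F x| <= M)%R ->
  exists a : R, \int[mu]_x (F x)%:E = a%:E /\ (`|a| <= M)%R.
Proof.
move=> M0 FM.
have [a [ha a0]] := nn_bound (F := fun x => Num.max (F x) 0%R) M0
  (fun x => ltac:(rewrite le_max lexx orbT /= ge_max M0 andbT;
     exact: le_trans (ler_norm _) (FM x))).
have [b [hb b0]] := nn_bound (F := fun x => Num.max (- F x)%R 0%R) M0
  (fun x => ltac:(rewrite le_max lexx orbT /= ge_max M0 andbT;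
     have := FM x; rewrite -normrN => HH; exact: le_trans (ler_norm _) HH)).
exists (a - b)%R; split.
  rewrite integralE.
  have -> : \int[mu]_x ((fun x => (F x)%:E) ^\+ x) = a%:E.
    by rewrite -ha; apply: eq_integral => x _; rewrite funeposE /= EFin_max.
  have -> : \int[mu]_x ((fun x => (F x)%:E) ^\- x) = b%:E.
    by rewrite -hb; apply: eq_integral => x _; rewrite funenegE /= EFin_max.
  by [].
move: a0 b0 => /andP[? ?] /andP[? ?].
rewrite ler_norml; apply/andP; split; lra.
Qed.

Lemma int_le_shift (F G : T -> R) (M c : R) : (0 <= M)%R -> (0 <= c)%R ->
  (forall x, `|F x| <= M)%R -> (forall x, `|G x| <= M)%R ->
  (forall x, F x <= G x + c)%R ->
  \int[mu]_x (F x)%:E <= \int[mu]_x (G x)%:E + (c *+ 2)%:E.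
Proof.
move=> M0 c0 FM GM FG.
rewrite [X in X <= _]integralE [X in _ <= X + _]integralE.
have h1 : \int[mu]_x ((fun x => (F x)%:E) ^\+ x) <=
          \int[mu]_x ((fun x => (G x)%:E) ^\+ x) + c%:E.
  apply: nn_shift => //.
  move=> x; rewrite !funeposE /= -!EFin_max -EFinD lee_fin.
  have := FG x; case: (leP (F x) 0%R); case: (leP (G x) 0%R) => ? ? ?; lra.
have h2 : \int[mu]_x ((fun x => (G x)%:E) ^\- x) <=
          \int[mu]_x ((fun x => (F x)%:E) ^\- x) + c%:E.
  apply: nn_shift => //.
  move=> x; rewrite !funenegE /= -!EFin_max -EFinD lee_fin.
  have := FG x; case: (leP (- F x)%R 0%R); case: (leP (- G x)%R 0%R) => ? ? ?; lra.
have [a [ha a0]] := nn_bound (F := fun x => Num.max (F x) 0%R) M0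
  (fun x => ltac:(rewrite le_max lexx orbT /= ge_max M0 andbT;
     exact: le_trans (ler_norm _) (FM x))).
have [b [hb b0]] := nn_bound (F := fun x => Num.max (- F x)%R 0%R) M0
  (fun x => ltac:(rewrite le_max lexx orbT /= ge_max M0 andbT;
     have := FM x; rewrite -normrN => HH; exact: le_trans (ler_norm _) HH)).
have [a' [ha' a0']] := nn_bound (F := fun x => Num.max (G x) 0%R) M0
  (fun x => ltac:(rewrite le_max lexx orbT /= ge_max M0 andbT;
     exact: le_trans (ler_norm _) (GM x))).
have [b' [hb' b0']] := nn_bound (F := fun x => Num.max (- G x)%R 0%R) M0
  (fun x => ltac:(rewrite le_max lexx orbT /= ge_max M0 andbT;
     have := GM x; rewrite -normrN => HH; exact: le_trans (ler_norm _) HH)).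
have E1 : \int[mu]_x ((fun x => (F x)%:E) ^\+ x) = a%:E.
  by rewrite -ha; apply: eq_integral => x _; rewrite funeposE /= EFin_max.
have E2 : \int[mu]_x ((fun x => (F x)%:E) ^\- x) = b%:E.
  by rewrite -hb; apply: eq_integral => x _; rewrite funenegE /= EFin_max.
have E3 : \int[mu]_x ((fun x => (G x)%:E) ^\+ x) = a'%:E.
  by rewrite -ha'; apply: eq_integral => x _; rewrite funeposE /= EFin_max.
have E4 : \int[mu]_x ((fun x => (G x)%:E) ^\- x) = b'%:E.
  by rewrite -hb'; apply: eq_integral => x _; rewrite funenegE /= EFin_max.
rewrite E1 E2 E3 E4 in h1 h2 *.
rewrite -!EFinD !lee_fin in h1 h2.
rewrite -!EFinB -EFinD lee_fin mulr2n; lra.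
Qed.
End inner2.
Section ex.
Context (R : realType) (r p : R).
Let F (x : R) : R := (- (p / r)) * expR (- r * x).
Lemma derF (x : R) : r != 0 -> is_derive x 1 F (expR (- r * x) * p).
Proof.
move=> r0.
have hg : is_derive x 1 (fun x : R => - r * x) (- r).
  have := is_deriveZ (- r) (is_derive_id x (1:R)).
  by rewrite /GRing.scale /= mulr1.
have he := is_derive1_comp (is_derive_expR (- r * x)) hg.
have := is_deriveZ (- (p / r)) he.
have -> : (- (p / r) *: (expR (- r * x) * - r)) = expR (- r * x) * p.
  rewrite /GRing.scale /=. field. done.
by [].
Qed.
End ex.
Section expint.
Context (R : realType) (r p : R).
Hypothesis r0 : 0 < r.
Let F (x : R) : R := (- (p / r)) * expR (- r * x).
Let f (x : R) : R := expR (- r * x) * p.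

Let cF : continuous F.
Proof.
move=> z; apply: (@continuousM _ R^o (fun=> - (p / r)) (fun x => expR (- r * x))).
  exact: cst_continuous.
apply: continuous_comp; last exact: continuous_expR.
by apply: continuousM => //; apply: cst_continuous.
Qed.

Let cf : continuous f.
Proof.
move=> z; apply: (@continuousM _ R^o (fun x => expR (- r * x)) (fun=> p)); last first.
  exact: cst_continuous.
apply: continuous_comp; last exact: continuous_expR.
by apply: continuousM => //; apply: cst_continuous.
Qed.

Let dF (x : R) : is_derive x 1 F (f x).
Proof.
have hg : is_derive x 1 (fun x : R => - r * x) (- r).
  have := is_deriveZ (- r) (is_derive_id x (1:R)).
  by rewrite /GRing.scale /= mulr1.
have he := is_derive1_comp (is_derive_expR (- r * x)) hg.
have := is_deriveZ (- (p / r)) he.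
have -> : (- (p / r) *: (expR (- r * x) * - r)) = f x.
  rewrite /f /GRing.scale /=. field. by rewrite gt_eqF.
by [].
Qed.

Let dF1 (x : R) : F^`()%classic x = f x.
Proof. by rewrite derive1E; have := dF x => H; exact: derive_val. Qed.

Lemma int_exp_ab (a b : R) : a < b ->
  (\int[lebesgue_measure]_(x in `[a, b]) (f x)%:E =
   (p / r * (expR (- r * a) - expR (- r * b)))%:E)%E.
Proof.
move=> ab.
rewrite (@continuous_FTC2 _ f F a b ab).
- by rewrite -EFinB /F; congr (_%:E); ring.
- exact: continuous_subspaceT.
- split.
  + by move=> x _; have := dF x => H; exact: ex_derive.
  + by apply/cvg_at_right_filter; exact: cF.
  + by apply/cvg_at_left_filter; exact: cF.
- by move=> x _; exact: dF1.
Qed.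

Lemma int_exp_ay (a : R) : 0 <= p ->
  (\int[lebesgue_measure]_(x in `[a, +oo[) (f x)%:E =
   (p / r * expR (- r * a))%:E)%E.
Proof.
move=> p0.
rewrite (@ge0_continuous_FTC2y _ f F a 0).
- by rewrite /F sub0e -EFinN; congr (_%:E); ring.
- by move=> x _; rewrite /f mulr_ge0 // expR_ge0.
- exact: continuous_subspaceT.
- have h : (fun x => expR (- r * x)) x @[x --> +oo] --> (0 : R).
    rewrite (_ : (fun x => expR (- r * x)) =
                 (fun z => expR (- z)) \o (fun z => r * z)); last first.
      by apply: funext => x; rewrite /= mulNr.
    apply: (@cvg_comp _ _ _ _ _ _ (pinfty_nbhs R)); last exact: cvgr_expR.
    exact: gt0_cvgMry.
  have := cvgM (cvg_cst (- (p / r))) h; rewrite mulr0.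
  by move=> /(_ _ _); apply.
- by move=> x _; have := dF x => H; exact: ex_derive.
- by apply/cvg_at_right_filter; exact: cF.
- by move=> x _; exact: dF1.
Qed.
End expint.
Section dintE.
Context (R : realType) (r p : R).
Hypothesis r0 : 0 < r.
Hypothesis p0 : 0 <= p.

Definition Dc (a b : \bar R) : R :=
  if (a <= b)%E then p / r * (disc r a - disc r b) else 0.

Lemma dintE (a b : \bar R) : (0 <= a)%E -> dint r p a b = (Dc a b)%:E.
Proof.
rewrite /dint /Dc; case: a => [a| |] //= a0; last first.
  rewrite (_ : [set t : R | _] = set0); last first.
    by apply/seteqP; split => t //= [+ _]; rewrite leye_eq.
  rewrite integral_set0 leye_eq; case: eqP => // ->.
  by rewrite /= subrr mulr0.
case: b => [b| |]; last first.
- rewrite (_ : [set t : R | _] = set0); last first.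
    by apply/seteqP; split => t //= [_]; rewrite leeNy_eq.
  by rewrite integral_set0 leeNy_eq.
- rewrite (_ : [set t : R | _] = `[a, +oo[%classic); last first.
    apply/seteqP; split => t /=; rewrite in_itv /= andbT ?lee_fin.
      by case.
    by move=> ->; rewrite leey.
  by rewrite int_exp_ay // leey /= subr0.
- have [ab|ba|ab] := ltgtP a b.
  + rewrite (_ : [set t : R | _] = `[a, b]%classic); last first.
      apply/seteqP; split => t /=; rewrite in_itv /= !lee_fin.
        by case => -> ->.
      by move=> /andP[-> ->].
    rewrite int_exp_ab //; case: ifPn => [_ //|].
    by rewrite lee_fin (ltW ab).
  + rewrite (_ : [set t : R | _] = set0); last first.
      apply/seteqP; split => t //= [].
      rewrite !lee_fin => atx tb.
      by have := lt_le_trans ba (le_trans atx tb); rewrite ltxx.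
    by rewrite integral_set0 ifF // lee_fin leNgt ba.
  + subst b; rewrite (_ : [set t : R | _] = [set a]); last first.
      apply/seteqP; split => t /=; rewrite !lee_fin.
        by case => ? ?; apply/eqP; rewrite eq_le andbC; apply/andP.
      by move=> ->.
    by rewrite integral_set1 lexx subrr mulr0.
Qed.
End dintE.
Section bounds.
Context (R : realType) (r p alpha gamma : R).
Hypothesis r0 : 0 < r.
Hypothesis p0 : 0 <= p.
Hypothesis al0 : 0 <= alpha.
Hypothesis g0 : 0 <= gamma.
Local Notation e := (disc r).
Local Notation Dc := (Dc r p).

Lemma e_ge0 z : 0 <= e z.
Proof. by case: z => [z| |] //=; rewrite expR_ge0. Qed.

Lemma e_le1 z : (0 <= z)%E -> e z <= 1.
Proof.
case: z => [z| |] //=; rewrite lee_fin => z0.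
by rewrite -expR0 ler_expR mulNr oppr_le0 mulr_ge0 // ltW.
Qed.

Lemma e_anti (a b : \bar R) : (0 <= a)%E -> (a <= b)%E -> e b <= e a.
Proof.
case: a => [a| |] //= a0; case: b => [b| |] //= ab; rewrite ?expR_ge0 //.
all: try by move: ab; rewrite leye_eq.
by rewrite ler_expR !mulNr lerN2 ler_pM2l // -lee_fin.
Qed.

Lemma Dc_ge0 a b : (0 <= a)%E -> 0 <= Dc a b.
Proof.
move=> a0'; rewrite /Dc; case: ifPn => // ab.
by rewrite mulr_ge0 ?divr_ge0 ?(ltW r0) // subr_ge0 e_anti.
Qed.

Lemma Dc_le a b : (0 <= a)%E -> Dc a b <= p / r * e a.
Proof.
move=> a0'; rewrite /Dc; case: ifPn => ab.
  by rewrite ler_wpM2l ?divr_ge0 ?(ltW r0) // lerBlDr lerDl e_ge0.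
by rewrite mulr_ge0 ?divr_ge0 ?(ltW r0) // e_ge0.
Qed.
End bounds.
Section bounds2.
Context (R : realType) (r p alpha gamma : R).
Hypothesis r0 : 0 < r.
Hypothesis p0 : 0 <= p.
Hypothesis al0 : 0 <= alpha.
Hypothesis g0 : 0 <= gamma.
Local Notation e := (disc r).
Local Notation Dc := (Dc r p).

Let c0 : 0 <= p / r. Proof. by rewrite divr_ge0 // ltW. Qed.

Lemma C1 (t th : \bar R) (T : R) : (0 <= t)%E -> (0 <= th)%E -> 0 <= T ->
  0 <= Dc t th - Dc t (Order.min th T%:E) <= p / r * e T%:E.
Proof.
move=> t0 th0 T0.
have eT0 := e_ge0 r T%:E.
have T0' : (0 <= T%:E)%E by rewrite lee_fin.
case: (leP th T%:E) => hth.
  by rewrite subrr lexx /= mulr_ge0.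
case: (leP t T%:E) => ht.
- rewrite /Dc ht (le_trans ht (ltW hth)).
  have h1 := e_anti r0 T0' (ltW hth).
  have h2 := e_ge0 r th.
  have := c0; set c := p / r => c0'.
  apply/andP; split; nra.
- rewrite /Dc [in X in _ - X]ifF; last by apply/negbTE; rewrite -ltNge.
  rewrite subr0 Dc_ge0 //=.
  apply: le_trans (Dc_le r0 p0 th t0) _.
  rewrite ler_wpM2l //; exact: (e_anti r0 T0' (ltW ht)).
Qed.
End bounds2.
Section bounds3.
Context (R : realType) (r p alpha gamma : R).
Hypothesis r0 : 0 < r.
Hypothesis p0 : 0 <= p.
Hypothesis al0 : 0 <= alpha.
Hypothesis g0 : 0 <= gamma.
Local Notation e := (disc r).
Local Notation Dc := (Dc r p).

Let c0 : 0 <= p / r. Proof. by rewrite divr_ge0 // ltW. Qed.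

Definition Fgen (s : R) (t x th : \bar R) (b b' : bool) : R :=
  s * Dc t x - (if b then e t * gamma else 0) - s * (if b' then e th * alpha else 0).

Definition F1 (s : R) (t th : \bar R) : R :=
  Fgen s t th th (t < th)%E (t < th)%E.

Definition F2 (s T : R) (t th : \bar R) : R :=
  Fgen s t (Order.min th T%:E) th (t < Order.min th T%:E)%E ((t < th)%E && (th < T%:E)%E).

Definition tl (T : R) (th : \bar R) : R := if (T%:E <= th)%E then Dc T%:E th else 0.

Lemma Fgen_bound s t x th b b' : (s = 1 \/ s = -1) -> (0 <= t)%E -> (0 <= th)%E ->
  `|Fgen s t x th b b'| <= p / r + gamma + alpha.
Proof.
move=> hs t0 th0; rewrite /Fgen.
have h1 := Dc_ge0 r0 p0 x t0.
have h2 := Dc_le r0 p0 x t0.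
have h3 := e_le1 r0 t0.
have h4 := e_le1 r0 th0.
have h5 := e_ge0 r t.
have h6 := e_ge0 r th.
have h7 : p / r * e t <= p / r by rewrite -[leRHS]mulr1 ler_wpM2l.
have h8 : 0 <= (if b then e t * gamma else 0) <= gamma.
  case: b; rewrite ?lexx ?g0 //= mulr_ge0 //= -[leRHS]mul1r ler_wpM2r //.
have h9 : 0 <= (if b' then e th * alpha else 0) <= alpha.
  case: b'; rewrite ?lexx ?al0 //= mulr_ge0 //= -[leRHS]mul1r ler_wpM2r //.
move: h8 h9 => /andP[? ?] /andP[? ?].
rewrite ler_norml; case: hs => ->; apply/andP; split; lra.
Qed.

Lemma C2 (t th : \bar R) (T : R) : (0 <= t)%E -> 0 <= T ->
  0 <= (if (t < th)%E then e t * gamma else 0) -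
       (if (t < Order.min th T%:E)%E then e t * gamma else 0) <= gamma * e T%:E.
Proof.
move=> t0 T0; have T0' : (0 <= T%:E)%E by rewrite lee_fin.
have eT0 := e_ge0 r T%:E; have et0 := e_ge0 r t.
case: (leP th T%:E) => hth; first by rewrite subrr lexx mulr_ge0.
case: (ltP t T%:E) => ht.
  by rewrite (lt_trans ht hth) subrr lexx mulr_ge0.
rewrite subr0; case: ifPn => _; last by rewrite lexx mulr_ge0.
rewrite mulr_ge0 //= mulrC ler_wpM2l //; by have := e_anti r0 T0' ht.
Qed.

Lemma C3 (t th : \bar R) (T : R) : 0 <= T ->
  0 <= (if (t < th)%E then e th * alpha else 0) -
       (if (t < th)%E && (th < T%:E)%E then e th * alpha else 0) <= alpha * e T%:E.
Proof.
move=> T0; have T0' : (0 <= T%:E)%E by rewrite lee_fin.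
have eT0 := e_ge0 r T%:E; have et0 := e_ge0 r th.
case: (ltP th T%:E) => hth; first by rewrite andbT subrr lexx mulr_ge0.
rewrite andbF subr0; case: ifPn => _; last by rewrite lexx mulr_ge0.
rewrite mulr_ge0 //= mulrC ler_wpM2l //; by have := e_anti r0 T0' hth.
Qed.

Lemma B1 s t th T : (s = 1 \/ s = -1) -> (0 <= t)%E -> (0 <= th)%E -> 0 <= T ->
  `|F1 s t th - F2 s T t th| <=
    p / r * e T%:E + gamma * e T%:E + alpha * e T%:E.
Proof.
move=> hs t0 th0 T0; rewrite /F1 /F2 /Fgen.
have := C1 r0 p0 t0 th0 T0; have := C2 th t0 T0; have := C3 t th T0.
move=> /andP[? ?] /andP[? ?] /andP[? ?].
rewrite ler_norml; case: hs => ->; apply/andP; split; lra.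
Qed.

Lemma C4 s t th T : (T%:E < t)%E -> F2 s T t th = 0.
Proof.
move=> Tt; rewrite /F2 /Fgen /Dc.
have h : ~~ (t <= Order.min th T%:E)%E.
  by rewrite -ltNge (le_lt_trans _ Tt) // ge_min lexx orbT.
rewrite (negbTE h) mulr0 sub0r ifF; last first.
  by apply: negbTE; rewrite -leNgt; apply: ltW; apply: le_lt_trans _ Tt; rewrite ge_min lexx orbT.
rewrite ifF ?mulr0 ?oppr0 ?subr0 ?addr0 //.
apply: negbTE; apply/negP => /andP[tth thT].
by have := lt_trans (lt_trans Tt tth) thT; rewrite ltxx.
Qed.

Lemma C5 s th T : (s = 1 \/ s = -1) -> 0 <= T ->
  `|F2 s T T%:E th| <= p / r * e T%:E.
Proof.
move=> hs T0; have T0' : (0 <= T%:E)%E by rewrite lee_fin.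
rewrite /F2 /Fgen ifF; last first.
  by apply: negbTE; rewrite -leNgt ge_min lexx orbT.
rewrite ifF; last first.
  by apply: negbTE; apply/negP => /andP[tth thT]; have := lt_trans tth thT; rewrite ltxx.
have := Dc_ge0 r0 p0 (Order.min th T%:E) T0'.
have := Dc_le r0 p0 (Order.min th T%:E) T0'.
move=> ? ?.
rewrite ler_norml; case: hs => ->; apply/andP; split; lra.
Qed.

Lemma B2 s t th T : (s = 1 \/ s = -1) -> (0 <= t)%E -> (0 <= th)%E -> 0 <= T ->
  `|F1 s t th - F2 s T (Order.min t T%:E) th| <=
    (p / r * e T%:E + gamma * e T%:E + alpha * e T%:E) + p / r * e T%:E.
Proof.
move=> hs t0 th0 T0.
have eT0 := e_ge0 r T%:E.
have c1 : 0 <= p / r * e T%:E by rewrite mulr_ge0.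
case: (leP t T%:E) => ht.
  by apply: le_trans (B1 hs t0 th0 T0) _; rewrite lerDl.
have := B1 hs t0 th0 T0; rewrite C4 // subr0 => H1.
have H2 := C5 th hs T0.
apply: le_trans (ler_normB _ _) _; exact: lerD.
Qed.

Lemma B3 T th : 0 <= T -> 0 <= tl T th <= p / r * e T%:E.
Proof.
move=> T0; have T0' : (0 <= T%:E)%E by rewrite lee_fin.
rewrite /tl; case: ifPn => _; last by rewrite lexx mulr_ge0 // e_ge0.
by rewrite Dc_ge0 // Dc_le.
Qed.
End bounds3.
Section stop.
Context (R : realType) (d : measure_display) (Omega : measurableType d)
  (P : probability Omega R) (X : R -> Omega -> R).

Lemma natfiltT t : natfilt X t setT.
Proof.
have [h0 hC _] := smallest_sigma_algebra setT
  (\bigcup_(s in `[0, t]) [set A | exists2 B : set R, measurable B & A = X s @^-1` B]).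
by have := hC set0 h0; rewrite setD0.
Qed.

Lemma theta_ge0 x w : (0 <= theta X x w)%E.
Proof.
apply: le_ereal_inf_tmp => _ [t [t0 _] <-]; by rewrite lee_fin.
Qed.

Lemma st_ge0 tau w : stopping_time X tau -> (0 <= tau w)%E.
Proof. by case=> h _; exact: h. Qed.

Lemma st_min tau (T : R) : 0 <= T -> stopping_time X tau ->
  stopping_time X (fun w => Order.min (tau w) T%:E).
Proof.
move=> T0 [h0 h1]; split.
  by move=> w; rewrite le_min h0 lee_fin T0.
move=> t t0; have [Tt|tT] := leP T t.
  rewrite (_ : [set w | _] = setT); first exact: natfiltT.
  apply/seteqP; split => w //= _; rewrite ge_min; apply/orP; right.
  by rewrite lee_fin.
rewrite (_ : [set w | _] = [set w | (tau w <= t%:E)%E]); first exact: h1.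
apply/seteqP; split => w /=; rewrite ge_min.
  by case/orP => //; rewrite lee_fin leNgt tT.
by move=> ->.
Qed.

Lemma st0 : stopping_time X (fun=> 0%E).
Proof.
split => // t t0; rewrite (_ : [set w | _] = setT); first exact: natfiltT.
by apply/seteqP; split => w //= _; rewrite lee_fin.
Qed.

Lemma SsetT_Sset x T : SsetT P X x T `<=` Sset P X x.
Proof.
move=> tau [st ae]; split => //; apply: filterS ae => w h.
by apply: le_trans h _; rewrite ge_min lexx.
Qed.

Lemma Sset_min x T tau : 0 <= T -> Sset P X x tau ->
  SsetT P X x T (fun w => Order.min (tau w) T%:E).
Proof.
move=> T0 [st ae]; split; first exact: st_min.
apply: filterS ae => w h.
by rewrite le_min !ge_min lexx orbT andbT h.
Qed.

Lemma Sset0 x : Sset P X x (fun=> 0%E).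
Proof. by split; [exact: st0 | apply: aeW => w; exact: theta_ge0]. Qed.
End stop.
Section integrands.
Context (R : realType) (r p alpha gamma : R).
Hypothesis r0 : 0 < r.
Hypothesis p0 : 0 <= p.
Local Open Scope ereal_scope.

Lemma Dc_oo th : Dc r p +oo th = 0%R.
Proof. by rewrite /Dc leye_eq; case: eqP => // ->; rewrite /= subrr mulr0. Qed.

Lemma vint_eq t th : 0 <= t -> 0 <= th ->
  (if t < +oo then
     dint r p t th
     - (if t < th then (disc r t * gamma)%:E else 0)
     - (if t < th then (disc r th * alpha)%:E else 0)
   else 0) = (F1 r p alpha gamma 1 t th)%:E.
Proof.
move=> t0 th0; rewrite dintE // /F1 /Fgen.
case: t t0 => [t| |] //= t0; last first.
  by rewrite Dc_oo ltNge leey /= !mulr0 !subr0.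
rewrite ltry; case: ifPn => _; rewrite !mul1r.
  by rewrite -!EFinB.
by rewrite !subr0 !sube0.
Qed.

Lemma uint_eq t th : 0 <= t -> 0 <= th ->
  (if t < +oo then
     - dint r p t th
     - (if t < th then (disc r t * gamma)%:E else 0)
     + (if t < th then (disc r th * alpha)%:E else 0)
   else 0) = (F1 r p alpha gamma (-1) t th)%:E.
Proof.
move=> t0 th0; rewrite dintE // /F1 /Fgen.
case: t t0 => [t| |] //= t0; last first.
  by rewrite Dc_oo ltNge leey /= !mulr0 !subr0.
rewrite ltry; case: ifPn => _; rewrite !mulN1r.
  by rewrite -EFinN -!EFinB -EFinD opprK.
rewrite oppr0 !subr0 [_ - 0%R]sube0; congr EFin; lra.
Qed.

Lemma vbint_eq (T : R) t th : 0 <= t -> 0 <= th ->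
  dint r p t (Order.min th T%:E)
  - (if t < Order.min th T%:E then (disc r t * gamma)%:E else 0)
  - (if (t < th) && (th < T%:E) then (disc r th * alpha)%:E else 0)
  = (F2 r p alpha gamma 1 T t th)%:E.
Proof.
move=> t0 th0; rewrite dintE // /F2 /Fgen !mul1r.
by case: ifPn => _; case: ifPn => _; rewrite ?subr0 ?sube0 -?EFinB.
Qed.

Lemma ubint_eq (T : R) t th : 0 <= t -> 0 <= th ->
  - dint r p t (Order.min th T%:E)
  - (if t < Order.min th T%:E then (disc r t * gamma)%:E else 0)
  + (if (t < th) && (th < T%:E) then (disc r th * alpha)%:E else 0)
  = (F2 r p alpha gamma (-1) T t th)%:E.
Proof.
move=> t0 th0; rewrite dintE // /F2 /Fgen !mulN1r opprK.
by case: ifPn => _; case: ifPn => _; rewrite ?oppr0 ?subr0 ?sube0 ?adde0 ?addr0 -?EFinN -?EFinB -?EFinD.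
Qed.

Lemma tail_eq (T : R) th : (0 <= T)%R ->
  (if T%:E <= th then dint r p T%:E th else 0) = (tl r p T th)%:E.
Proof.
move=> T0; rewrite /tl; case: ifPn => _ //.
by rewrite dintE // lee_fin.
Qed.
End integrands.
Section supl.
Context (R : realType) (U : Type).
Local Open Scope ereal_scope.

Lemma sup_close (A B : set U) (I J : U -> \bar R) (m : U -> U) (K del : R) (u0 : U) :
  B u0 -> B `<=` A -> (forall u, A u -> B (m u)) ->
  (forall u, A u -> exists a : R, I u = a%:E /\ (`|a| <= K)%R) ->
  (forall u, B u -> exists a : R, J u = a%:E /\ (`|a| <= K)%R) ->
  (forall u, A u -> I u <= J (m u) + del%:E) ->
  (forall u, B u -> J u <= I u + del%:E) ->
  exists a b : R, ereal_sup (I @` A) = a%:E /\ ereal_sup (J @` B) = b%:E /\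
    (`|a - b| <= del)%R.
Proof.
move=> Bu0 BA mB IK JK IJ JI.
have supI_le : ereal_sup (I @` A) <= K%:E.
  apply: ge_ereal_sup => _ [u Au <-].
  by have [a [-> ha]] := IK u Au; rewrite lee_fin (le_trans (ler_norm _)).
have supJ_le : ereal_sup (J @` B) <= K%:E.
  apply: ge_ereal_sup => _ [u Bu <-].
  by have [a [-> ha]] := JK u Bu; rewrite lee_fin (le_trans (ler_norm _)).
have supI_ge : (- K)%:E <= ereal_sup (I @` A).
  apply: le_trans (ereal_sup_ubound (ex_intro2 _ _ u0 (BA _ Bu0) erefl)).
  have [a [-> ha]] := IK u0 (BA _ Bu0); rewrite lee_fin.
  by move: ha; rewrite ler_norml => /andP[].
have supJ_ge : (- K)%:E <= ereal_sup (J @` B).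
  apply: le_trans (ereal_sup_ubound (ex_intro2 _ _ u0 Bu0 erefl)).
  have [a [-> ha]] := JK u0 Bu0; rewrite lee_fin.
  by move: ha; rewrite ler_norml => /andP[].
have finI : ereal_sup (I @` A) \is a fin_num.
  by rewrite fin_numE -ltey -ltNye (lt_le_trans _ supI_ge) ?ltNyr // (le_lt_trans supI_le) ?ltry.
have finJ : ereal_sup (J @` B) \is a fin_num.
  by rewrite fin_numE -ltey -ltNye (lt_le_trans _ supJ_ge) ?ltNyr // (le_lt_trans supJ_le) ?ltry.
have h1 : ereal_sup (J @` B) <= ereal_sup (I @` A) + del%:E.
  apply: ge_ereal_sup => _ [u Bu <-].
  apply: le_trans (JI u Bu) _; rewrite leeD2r //.
  exact: ereal_sup_ubound (ex_intro2 _ _ u (BA _ Bu) erefl).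
have h2 : ereal_sup (I @` A) <= ereal_sup (J @` B) + del%:E.
  apply: ge_ereal_sup => _ [u Au <-].
  apply: le_trans (IJ u Au) _; rewrite leeD2r //.
  exact: ereal_sup_ubound (ex_intro2 _ _ (m u) (mB u Au) erefl).
exists (fine (ereal_sup (I @` A))), (fine (ereal_sup (J @` B))).
rewrite !fineK //; split => //; split => //.
move: h1 h2; rewrite -(fineK finI) -(fineK finJ) -!EFinD !lee_fin => h1 h2.
rewrite ler_norml; apply/andP; split; lra.
Qed.
End supl.
Section cvgl.
Context (R : realType).

Lemma expr_cvg0 (r C : R) : 0 < r -> C * expR (- r * T) @[T --> +oo] --> (0 : R).
Proof.
move=> r0.
have h : (fun x => expR (- r * x)) x @[x --> +oo] --> (0 : R).
  rewrite (_ : (fun x => expR (- r * x)) =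
               (fun z => expR (- z)) \o (fun z => r * z)); last first.
    by apply: funext => x; rewrite /= mulNr.
  apply: (@cvg_comp _ _ _ _ _ _ (pinfty_nbhs R)); last exact: cvgr_expR.
  exact: gt0_cvgMry.
have := cvgM (cvg_cst C) h; rewrite mulr0.
by move=> /(_ _ _); apply.
Qed.

Lemma cvg_exp_bound (f : R -> \bar R) (l C r : R) : 0 < r ->
  (forall T, 0 <= T -> exists y, f T = y%:E /\ `|y - l| <= C * expR (- r * T)) ->
  f T @[T --> +oo] --> l%:E.
Proof.
move=> r0 hf; apply/fine_cvgP; split.
  near=> T; suff T0 : 0 <= T by have [y [-> _]] := hf T T0.
  by near: T; exact: nbhs_pinfty_ge.
apply/cvgrPdist_le => eps eps0.
have := expr_cvg0 C r0 => /cvgrPdist_le /(_ eps eps0) hC.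
near=> T.
suff T0 : 0 <= T.
  have [y [fy hy]] := hf T T0.
  rewrite /= fy /= distrC.
  apply: le_trans hy _; apply: le_trans (ler_norm _) _.
  have := near hC T; rewrite sub0r normrN; exact.
by near: T; exact: nbhs_pinfty_ge.
Unshelve. all: by end_near.
Qed.
End cvgl.
Section main.
Context (R : realType) (d : measure_display) (Omega : measurableType d)
  (P : probability Omega R) (X : R -> Omega -> R) (r p alpha gamma x : R).
Hypothesis r0 : 0 < r.
Hypothesis p0 : 0 <= p.
Hypothesis al0 : 0 <= alpha.
Hypothesis g0 : 0 <= gamma.

Let K0 := p / r + gamma + alpha.
Definition bnd (T : R) := (p / r * disc r T%:E + gamma * disc r T%:E + alpha * disc r T%:E)
                   + p / r * disc r T%:E.

Let K00 : 0 <= K0.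
Proof. by rewrite /K0 !addr_ge0 // divr_ge0 // ltW. Qed.

Lemma key (s : R) (T : R) : (s = 1 \/ s = -1) -> 0 <= T ->
  exists a b : R,
    ereal_sup [set (\int[P]_w (F1 r p alpha gamma s (tau w) (theta X x w))%:E)%E
               | tau in Sset P X x] = a%:E /\
    ereal_sup [set (\int[P]_w (F2 r p alpha gamma s T (tau w) (theta X x w))%:E)%E
               | tau in SsetT P X x T] = b%:E /\
    (`|a - b| <= bnd T *+ 2)%R.
Proof.
move=> hs T0.
have eT0 := e_ge0 r T%:E.
have c0 : 0 <= p / r by rewrite divr_ge0 // ltW.
have bnd0 : 0 <= bnd T by rewrite /bnd !addr_ge0 // mulr_ge0.
have mu1 := probability_setT P.
apply: (@sup_close _ _ _ _ _ _ (fun tau w => Order.min (tau w) T%:E) K0 _ (fun=> 0%E)).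
- split; first exact: st0.
  by apply: aeW => w; rewrite le_min theta_ge0 lee_fin T0.
- exact: SsetT_Sset.
- by move=> tau; exact: Sset_min.
- move=> tau [st _]; apply: (int_fin mu1 K00) => w.
  rewrite /K0 /F1; apply: (Fgen_bound r0 p0 al0 g0) => //; [exact: st_ge0 st | exact: theta_ge0].
- move=> tau [st _]; apply: (int_fin mu1 K00) => w.
  rewrite /K0 /F1 /F2; apply: (Fgen_bound r0 p0 al0 g0) => //; [exact: st_ge0 st | exact: theta_ge0].
- move=> tau [st _].
  apply: (int_le_shift mu1 K00 bnd0).
  + move=> w; rewrite /K0 /F1 /F2; apply: (Fgen_bound r0 p0 al0 g0) => //; [exact: st_ge0 st | exact: theta_ge0].
  + move=> w; rewrite /K0 /F2; apply: (Fgen_bound r0 p0 al0 g0) => //; last exact: theta_ge0.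
    by rewrite le_min (st_ge0 _ st) // lee_fin.
  + move=> w; have := B2 r0 p0 al0 g0 hs (st_ge0 w st) (theta_ge0 X x w) T0.
    rewrite ler_norml => /andP[_ h]; rewrite /bnd; lra.
- move=> tau [st _].
  apply: (int_le_shift mu1 K00 bnd0).
  + move=> w; rewrite /K0 /F1 /F2; apply: (Fgen_bound r0 p0 al0 g0) => //; [exact: st_ge0 st | exact: theta_ge0].
  + move=> w; rewrite /K0 /F1 /F2; apply: (Fgen_bound r0 p0 al0 g0) => //; [exact: st_ge0 st | exact: theta_ge0].
  + move=> w; have := B1 r0 p0 al0 g0 hs (st_ge0 w st) (theta_ge0 X x w) T0.
    rewrite ler_norml => /andP[h _]; rewrite /bnd.
    have : 0 <= p / r * disc r T%:E by rewrite mulr_ge0.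
    lra.
Qed.
End main.
Unset Implicit Arguments.
Theorem proposition5p4 (R : realType) (d : measure_display)
  (Omega : measurableType d) (P : probability Omega R) (X : R -> Omega -> R)
  (r p alpha gamma : R) :
  spec_neg_levy P X -> 0 < r ->
  (\int[P]_w (expR (X 1 w))%:E = (expR r)%:E)%E ->
  0 < p -> 0 < alpha -> 0 <= gamma ->
  forall x : R, 0 < x ->
  [/\ (eps_v P X r p alpha gamma x T @[T --> +oo] --> 0%E) /\
      (eps_u P X r p alpha gamma x T @[T --> +oo] --> 0%E),
      (vbar P X r p alpha gamma x T @[T --> +oo] --> vfun P X r p alpha gamma x) /\
      (vtilde P X r p alpha gamma x T @[T --> +oo] --> vfun P X r p alpha gamma x) &
      (ubar P X r p alpha gamma x T @[T --> +oo] --> ufun P X r p alpha gamma x) /\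
      (utilde P X r p alpha gamma x T @[T --> +oo] --> ufun P X r p alpha gamma x)].
Proof.
move=> _ r0 _ p0' al0' g0 x _.
have p0 := ltW p0'; have al0 := ltW al0'.
have c0 : 0 <= p / r by rewrite divr_ge0 // ltW.
have vE : vfun P X r p alpha gamma x = ereal_sup [set (\int[P]_w
    (F1 r p alpha gamma 1 (tau w) (theta X x w))%:E)%E | tau in Sset P X x].
  rewrite /vfun; congr ereal_sup; apply: eq_imagel => tau [st _].
  apply: eq_integral => w _; rewrite vint_eq //; [exact: st_ge0 st | exact: theta_ge0].
have uE : ufun P X r p alpha gamma x = ereal_sup [set (\int[P]_w
    (F1 r p alpha gamma (-1) (tau w) (theta X x w))%:E)%E | tau in Sset P X x].
  rewrite /ufun; congr ereal_sup; apply: eq_imagel => tau [st _].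
  apply: eq_integral => w _; rewrite uint_eq //; [exact: st_ge0 st | exact: theta_ge0].
have vbE T : 0 <= T -> vbar P X r p alpha gamma x T = ereal_sup [set (\int[P]_w
    (F2 r p alpha gamma 1 T (tau w) (theta X x w))%:E)%E | tau in SsetT P X x T].
  move=> T0; rewrite /vbar; congr ereal_sup; apply: eq_imagel => tau [st _].
  apply: eq_integral => w _; rewrite vbint_eq //; [exact: st_ge0 st | exact: theta_ge0].
have ubE T : 0 <= T -> ubar P X r p alpha gamma x T = ereal_sup [set (\int[P]_w
    (F2 r p alpha gamma (-1) T (tau w) (theta X x w))%:E)%E | tau in SsetT P X x T].
  move=> T0; rewrite /ubar; congr ereal_sup; apply: eq_imagel => tau [st _].
  apply: eq_integral => w _; rewrite ubint_eq //; [exact: st_ge0 st | exact: theta_ge0].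
have tE T : 0 <= T -> exists t : R, tailterm P X r p x T = t%:E /\
    0 <= t <= p / r * expR (- r * T).
  move=> T0; rewrite /tailterm.
  under eq_integral do rewrite tail_eq //.
  apply: (nn_bound (probability_setT P)); first by rewrite mulr_ge0 // expR_ge0.
  by move=> w; have := B3 r0 p0 (theta X x w) T0.
have [lv [b0 [hv _]]] := key P X x r0 p0 al0 g0 (or_introl erefl) (lexx 0).
have [lu [b0' [hu _]]] := key P X x r0 p0 al0 g0 (or_intror erefl) (lexx 0).
rewrite -vE in hv; rewrite -uE in hu.
have hvb T : 0 <= T -> exists b, vbar P X r p alpha gamma x T = b%:E /\
    `|lv - b| <= bnd r p alpha gamma T *+ 2.
  move=> T0; have [a [b [ha [hb hab]]]] := key P X x r0 p0 al0 g0 (or_introl erefl) T0.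
  rewrite -vE hv in ha; case: ha => ->; exists b; split => //; by rewrite vbE.
have hub T : 0 <= T -> exists b, ubar P X r p alpha gamma x T = b%:E /\
    `|lu - b| <= bnd r p alpha gamma T *+ 2.
  move=> T0; have [a [b [ha [hb hab]]]] := key P X x r0 p0 al0 g0 (or_intror erefl) T0.
  rewrite -uE hu in ha; case: ha => ->; exists b; split => //; by rewrite ubE.
pose C := 2 * (p / r + gamma + alpha + p / r) + p / r.
have hC T : bnd r p alpha gamma T *+ 2 + p / r * expR (- r * T) = C * expR (- r * T).
  by rewrite /bnd /C /= mulr2n; ring.
have eT0 T : 0 <= p / r * expR (- r * T) by rewrite mulr_ge0 // expR_ge0.
have bnd0 T : 0 <= bnd r p alpha gamma T *+ 2.
  by rewrite mulrn_wge0 // /bnd !addr_ge0 // mulr_ge0 // ?e_ge0 // ltW.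
split; [split|split|split].
- apply: (cvg_exp_bound (l := 0) (C := C) r0) => T T0.
  have [b [hb hbb]] := hvb T T0; have [t [ht htt]] := tE T T0.
  exists (b - (lv - t)); split; first by rewrite /eps_v /vtilde hb hv ht.
  move: hbb htt; rewrite -(hC T) ler_norml => /andP[? ?] /andP[? ?].
  have := bnd0 T; rewrite subr0 ler_norml; move=> ?; apply/andP; split; lra.
- apply: (cvg_exp_bound (l := 0) (C := C) r0) => T T0.
  have [b [hb hbb]] := hub T T0; have [t [ht htt]] := tE T T0.
  exists (b - (lu + t)); split; first by rewrite /eps_u /utilde hb hu ht.
  move: hbb htt; rewrite -(hC T) ler_norml => /andP[? ?] /andP[? ?].
  have := bnd0 T; rewrite subr0 ler_norml; move=> ?; apply/andP; split; lra.
- rewrite hv; apply: (cvg_exp_bound (C := C) r0) => T T0.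
  have [b [hb hbb]] := hvb T T0.
  exists b; split => //.
  move: hbb; rewrite -(hC T) ler_norml => /andP[? ?].
  have := eT0 T; rewrite ler_norml; move=> ?; apply/andP; split; lra.
- rewrite hv; apply: (cvg_exp_bound (C := C) r0) => T T0.
  have [t [ht htt]] := tE T T0.
  exists (lv - t); split; first by rewrite /vtilde hv ht.
  move: htt; rewrite -(hC T) => /andP[? ?].
  have := bnd0 T; rewrite ler_norml; move=> ?; apply/andP; split; lra.
- rewrite hu; apply: (cvg_exp_bound (C := C) r0) => T T0.
  have [b [hb hbb]] := hub T T0.
  exists b; split => //.
  move: hbb; rewrite -(hC T) ler_norml => /andP[? ?].
  have := eT0 T; rewrite ler_norml; move=> ?; apply/andP; split; lra.
- rewrite hu; apply: (cvg_exp_bound (C := C) r0) => T T0.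
  have [t [ht htt]] := tE T T0.
  exists (lu + t); split; first by rewrite /utilde hu ht.
  move: htt; rewrite -(hC T) => /andP[? ?].
  have := bnd0 T; rewrite ler_norml; move=> ?; apply/andP; split; lra.
Qed.
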